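(* Let $X$ be a set and $\varphi_P\in\Im(P(X))$. Then $\varphi_P$ is a pre-subbase of some fuzzifying topology on $X$ if and only if $\varphi_P^{(\cup)}(X)=1$, where $\varphi_P^{(\cup)}(A)=\bigvee\{\bigwedge_{\lambda\in\Lambda}\varphi_P(B_\lambda):\bigcup_{\lambda\in\Lambda}B_\lambda=A\}$.
   Context: $\Im(Y)$ denotes the fuzzy subsets $Y\to[0,1]$ and $P(X)$ the power set. A fuzzifying topology on $X$ is $T\in\Im(P(X))$ with $T(X)=1$, $T(A\cap B)\ge\min(T(A),T(B))$ and $T(\bigcup_\lambda A_\lambda)\ge\inf_\lambda T(A_\lambda)$. A fuzzy family $\beta\in\Im(P(X))$ is a pre-base of $T$ if $\beta\le T$ pointwise and for all $x\in X$, $A\subseteq X$: $\sup_{x\in B\subseteq A}T(B)\le\sup_{x\in B\subseteq A}\beta(B)$. For $\varphi_P\in\Im(P(X))$ define $\varphi_P^{\Cap}(A)=\sup\{\min_{1\le i\le n}\varphi_P(B_i): n\ge1,\ B_1,\dots,B_n\subseteq X,\ \bigcap_{i=1}^nB_i=A\}$; $\varphi_P$ is a pre-subbase of $T$ if $\varphi_P^{\Cap}$ is a pre-base of $T$. *)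

(* Defs.v *)
From HB Require Import structures.
From mathcomp Require Import all_boot all_order all_algebra.
From mathcomp Require Import classical_sets boolp reals.
Set Implicit Arguments. Unset Strict Implicit. Unset Printing Implicit Defensive.
Import Order.TTheory GRing.Theory Num.Theory.
Local Open Scope classical_set_scope.
Local Open Scope ring_scope.

Section FuzzyDefs.
Variable R : realType.

(* Supremum and infimum in the complete lattice [0,1]:
   the empty sup is 0 and the empty inf is 1. *)
Definition sup01 (S : set R) : R := if pselect (S = set0) then 0 else sup S.
Definition inf01 (S : set R) : R := if pselect (S = set0) then 1 else inf S.

Variable X : Type.

Definition fuzzy_family (T : set X -> R) : Prop := forall A, 0 <= T A <= 1.

(* Arbitrary indexed families {A_lambda} are represented by the set of their
   members F : set (set X); union and infimum depend only on this set. *)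
Definition fuzzifying_topology (T : set X -> R) : Prop :=
  [/\ fuzzy_family T,
      T setT = 1,
      (forall A B, Num.min (T A) (T B) <= T (A `&` B)) &
      (forall F : set (set X), inf01 (T @` F) <= T (\bigcup_(B in F) B))].

Definition nbhd_sup (T : set X -> R) (x : X) (A : set X) : R :=
  sup01 (T @` [set B | B x /\ B `<=` A]).

Definition pre_base (T beta : set X -> R) : Prop :=
  fuzzy_family beta /\
  (forall A, beta A <= T A) /\
  (forall x A, nbhd_sup T x A <= nbhd_sup beta x A).

Definition fin_cap_closure (phi : set X -> R) (A : set X) : R :=
  sup01 [set m | exists (n : nat) (B : 'I_n.+1 -> set X),
           \bigcap_(i in [set: 'I_n.+1]) B i = A /\
           m = \big[Num.min/1]_(i < n.+1) phi (B i)].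

Definition pre_subbase (T phi : set X -> R) : Prop :=
  pre_base T (fin_cap_closure phi).

Definition union_closure (phi : set X -> R) (A : set X) : R :=
  sup01 [set m | exists F : set (set X),
           \bigcup_(B in F) B = A /\ m = inf01 (phi @` F)].

End FuzzyDefs.

(* Main.v *)
Require Import Defs.
From mathcomp Require Import all_boot all_order all_algebra.
From mathcomp Require Import classical_sets boolp reals.
From mathcomp Require Import lra zify.
Set Implicit Arguments. Unset Strict Implicit.
Import Order.TTheory GRing.Theory Num.Theory.
Local Open Scope classical_set_scope.
Local Open Scope ring_scope.
Section H.
Variable R : realType.
Implicit Types S : set R.

Lemma ne0 {S} : ~ S = set0 -> S !=set0.
Proof. by move=> h; apply/set0P/eqP. Qed.

Lemma sup01_cases S : (S = set0 /\ sup01 S = 0) \/ (S !=set0 /\ sup01 S = sup S).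
Proof.
rewrite /sup01; destruct (pselect (S = set0)) as [h|h]; [left|right] => //.
by split => //; apply: ne0.
Qed.

Lemma inf01_cases S : (S = set0 /\ inf01 S = 1) \/ (S !=set0 /\ inf01 S = inf S).
Proof.
rewrite /inf01; destruct (pselect (S = set0)) as [h|h]; [left|right] => //.
by split => //; apply: ne0.
Qed.

Lemma le_from_lt (a b : R) : (forall r, r < a -> r <= b) -> a <= b.
Proof.
move=> H; rewrite leNgt; apply/negP => ba.
have := H ((a + b) / 2); lra.
Qed.

Lemma sup01_le S ub : (forall s, S s -> s <= ub) -> 0 <= ub -> sup01 S <= ub.
Proof.
move=> H u0; case: (sup01_cases S) => -[S0 ->] //.
exact: ge_sup.
Qed.

Lemma sup01_ge S ub s : (forall s, S s -> s <= ub) -> S s -> s <= sup01 S.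
Proof.
move=> H Ss; case: (sup01_cases S) => -[S0 ->]; first by rewrite S0 in Ss.
by apply: ub_le_sup => //; exists ub.
Qed.

Lemma sup01_gt S r : 0 <= r -> r < sup01 S -> exists2 s, S s & r < s.
Proof.
move=> r0; case: (sup01_cases S) => -[S0 ->]; first lra.
exact: sup_gt.
Qed.

Lemma sup01_ge0 S ub : (forall s, S s -> 0 <= s <= ub) -> 0 <= sup01 S.
Proof.
move=> H; case: (sup01_cases S) => -[S0 ->] //.
case: S0 => s Ss; have /andP[s0 _] := H _ Ss.
apply: le_trans s0 _; apply: ub_le_sup => //; exists ub => x /H /andP[] //.
Qed.

Lemma inf01_ge S lb : (forall s, S s -> lb <= s) -> lb <= 1 -> lb <= inf01 S.
Proof.
move=> H l1; case: (inf01_cases S) => -[S0 ->] //.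
exact: lb_le_inf.
Qed.

Lemma inf01_le S lb s : (forall s, S s -> lb <= s) -> S s -> inf01 S <= s.
Proof.
move=> H Ss; case: (inf01_cases S) => -[S0 ->]; first by rewrite S0 in Ss.
by apply: ge_inf => //; exists lb.
Qed.

Lemma inf01_le1 S : (forall s, S s -> 0 <= s <= 1) -> inf01 S <= 1.
Proof.
move=> H; case: (inf01_cases S) => -[S0 ->] //.
case: S0 => s Ss; have /andP[s0 s1] := H _ Ss.
apply: le_trans s1; apply: ge_inf => //; exists 0 => x /H /andP[] //.
Qed.

Lemma inf01_ge0 S : (forall s, S s -> 0 <= s) -> 0 <= inf01 S.
Proof. by move=> H; apply: inf01_ge => //; lra. Qed.

Lemma sup01_min (S1 S2 S3 : set R) :
  (forall s, S1 s -> s <= 1) -> (forall s, S2 s -> s <= 1) ->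
  (forall s, S3 s -> 0 <= s <= 1) ->
  (forall a b, S1 a -> S2 b -> exists2 c, S3 c & Num.min a b <= c) ->
  Num.min (sup01 S1) (sup01 S2) <= sup01 S3.
Proof.
move=> H1 H2 H3 H.
have z3 := @sup01_ge0 S3 1 H3.
case: (sup01_cases S1) => -[S10 ->]; first by apply: le_trans z3; rewrite ge_min lexx.
case: (sup01_cases S2) => -[S20 ->]; first by apply: le_trans z3; rewrite ge_min lexx orbT.
apply: le_from_lt => r; case: (lerP 0 r) => r0; last by move=> _; lra.
rewrite lt_min => /andP[r1 r2].
have [a Sa ra] := sup_gt S10 r1.
have [b Sb rb] := sup_gt S20 r2.
have [c Sc mc] := H _ _ Sa Sb.
have := @sup01_ge S3 1 c (fun s h => proj2 (andP (H3 s h))) Sc.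
have : r < Num.min a b by rewrite lt_min ra rb.
move=> ? ?; apply: ltW; apply: lt_le_trans (le_trans mc _) => //.
Qed.

Lemma bigmin_le n (F : 'I_n -> R) i : \big[Num.min/1]_(j < n) F j <= F i.
Proof.
elim: n F i => [|n IH] F i; first by case: i.
rewrite big_ord_recl; case: (unliftP ord0 i) => [j ->|->].
  by rewrite ge_min IH orbT.
by rewrite ge_min lexx.
Qed.

Lemma le_bigmin n (F : 'I_n -> R) r :
  r <= 1 -> (forall i, r <= F i) -> r <= \big[Num.min/1]_(j < n) F j.
Proof.
move=> r1 H; apply: (big_ind (fun v => r <= v)) => // x y rx ry.
by rewrite le_min rx ry.
Qed.

Lemma bigmin01 n (F : 'I_n -> R) :
  (forall i, 0 <= F i <= 1) -> 0 <= \big[Num.min/1]_(j < n) F j <= 1.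
Proof.
move=> H; apply: (big_ind (fun v => 0 <= v <= 1)) => //.
  by rewrite ler01 lexx.
move=> x y /andP[x0 x1] /andP[y0 y1].
by rewrite le_min x0 y0 ge_min x1.
Qed.

Section Main.
Variables (X : Type) (phi : set X -> R).
Hypothesis phi01 : fuzzy_family phi.

Let beta := fin_cap_closure phi.

Definition capset (A : set X) := [set m | exists (n : nat) (B : 'I_n.+1 -> set X),
           \bigcap_(i in [set: 'I_n.+1]) B i = A /\
           m = \big[Num.min/1]_(i < n.+1) phi (B i)].

Lemma capset01 A m : capset A m -> 0 <= m <= 1.
Proof. by move=> [n [B [_ ->]]]; apply: bigmin01 => i; apply: phi01. Qed.

Lemma beta01 A : 0 <= beta A <= 1.
Proof.
apply/andP; split; first exact: (@sup01_ge0 (capset A) 1 (@capset01 A)).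
by apply: sup01_le => // s /capset01 /andP[].
Qed.

Lemma beta_ge A : phi A <= beta A.
Proof.
have /andP[p0 p1] := phi01 A.
apply: le_trans (@sup01_ge (capset A) 1 (\big[Num.min/1]_(i < 1) phi A) _ _).
  by apply: le_bigmin.
  by move=> s /capset01 /andP[].
exists 0%N, (fun _ => A); split => //.
by apply/seteqP; split => [x h|x Ax i _] //; exact: (h ord0 I).
Qed.

Lemma beta_gt A r : 0 <= r -> r < beta A -> exists C, A `<=` C /\ r < phi C.
Proof.
move=> r0 /(@sup01_gt (capset A) r r0) [m [n [B [EB ->]]] rm].
exists (B ord0); split; last by apply: (lt_le_trans rm); apply: bigmin_le.
by rewrite -EB => x h; exact: (h ord0 I).
Qed.

Lemma beta_min A B : Num.min (beta A) (beta B) <= beta (A `&` B).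
Proof.
apply: sup01_min.
- by move=> s /capset01 /andP[].
- by move=> s /capset01 /andP[].
- exact: capset01.
move=> _ _ [n1 [B1 [E1 ->]]] [n2 [B2 [E2 ->]]].
pose C (i : 'I_(n1 + n2.+1).+1) :=
  if (i < n1.+1)%N then B1 (inord i) else B2 (inord (i - n1.+1)).
exists (\big[Num.min/1]_(i < (n1 + n2.+1).+1) phi (C i)).
  exists (n1 + n2.+1)%N, C; split => //.
  rewrite -E1 -E2; apply/seteqP; split => x.
  - move=> h; split => j _.
    + have := h (inord j) I; rewrite /C inordK; last first.
        by apply: leq_trans (ltn_ord j) _; rewrite ltnS leq_addr.
      by rewrite ltn_ord inord_val.
    + have := h (inord (j + n1.+1)) I; rewrite /C inordK; last first.
        by have := ltn_ord j; lia.
      by rewrite ltnNge leq_addl /= addnK inord_val.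
  - by move=> [h1 h2] i _; rewrite /C; case: ifP => _; [apply: h1|apply: h2].
apply: le_bigmin.
  by rewrite ge_min; apply/orP; left; have /andP[] := @bigmin01 _ (fun i => phi (B1 i)) (fun i => phi01 (B1 i)).
move=> i; rewrite /C; case: ifP => _.
  by rewrite ge_min bigmin_le.
by rewrite ge_min bigmin_le orbT.
Qed.


Let N x A := nbhd_sup beta x A.
Definition Top (A : set X) : R := inf01 [set N x A | x in A].

Lemma N01 x A : 0 <= N x A <= 1.
Proof.
have H : forall s, (beta @` [set B | B x /\ B `<=` A]) s -> 0 <= s <= 1.
  by move=> _ [B _ <-]; apply: beta01.
apply/andP; split; first exact: (@sup01_ge0 _ 1 H).
by apply: sup01_le => // s /H /andP[].
Qed.

Lemma N_ge x A B : B x -> B `<=` A -> beta B <= N x A.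
Proof.
move=> Bx BA; apply: (@sup01_ge _ 1); last by exists B.
by move=> _ [C _ <-]; have /andP[] := beta01 C.
Qed.

Lemma N_mono x A A' : A `<=` A' -> N x A <= N x A'.
Proof.
move=> AA'; apply: sup01_le; last by have /andP[] := N01 x A'.
move=> _ [B [Bx BA] <-]; apply: N_ge => //; exact: subset_trans AA'.
Qed.

Lemma N_min x A B : Num.min (N x A) (N x B) <= N x (A `&` B).
Proof.
apply: sup01_min.
- by move=> _ [C _ <-]; have /andP[] := beta01 C.
- by move=> _ [C _ <-]; have /andP[] := beta01 C.
- by move=> _ [C _ <-]; apply: beta01.
move=> _ _ [B1 [x1 s1] <-] [B2 [x2 s2] <-].
exists (beta (B1 `&` B2)); last exact: beta_min.
exists (B1 `&` B2) => //; split; first by split.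
by move=> y [/s1 ? /s2 ?]; split.
Qed.

Lemma Top01 A : 0 <= Top A <= 1.
Proof.
apply/andP; split.
  by apply: inf01_ge0 => _ [x _ <-]; have /andP[] := N01 x A.
by apply: inf01_le1 => _ [x _ <-]; apply: N01.
Qed.

Lemma Top_le_N x A : A x -> Top A <= N x A.
Proof.
move=> Ax; apply: (@inf01_le _ 0); last by exists x.
by move=> _ [y _ <-]; have /andP[] := N01 y A.
Qed.

Lemma Top_ge_beta A : beta A <= Top A.
Proof.
apply: inf01_ge; last by have /andP[] := beta01 A.
by move=> _ [x Ax <-]; apply: N_ge.
Qed.

End Main.
End H.

Theorem theorem2p3 (R : realType) (X : Type) (phi : set X -> R) :
  fuzzy_family phi ->
  ((exists T : set X -> R, fuzzifying_topology T /\ pre_subbase T phi) <->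
   union_closure phi setT = 1).
Proof.
move=> phi01; split.
- move=> [T [[fT TX _ _] [fb [Tb pb]]]].
  have S01 : forall s, [set m | exists F : set (set X),
           \bigcup_(B in F) B = setT /\ m = inf01 (phi @` F)] s -> 0 <= s <= 1.
    move=> _ [F [_ ->]]; apply/andP; split.
      by apply: inf01_ge0 => _ [B _ <-]; have /andP[] := phi01 B.
    by apply: inf01_le1 => _ [B _ <-]; apply: phi01.
  apply/eqP; rewrite eq_le; apply/andP; split.
    by apply: sup01_le => // s /S01 /andP[].
  apply: le_from_lt => r r1.
  case: (lerP 0 r) => r0; last first.
    by apply: ltW; apply: lt_le_trans r0 _; exact: (sup01_ge0 (ub:=1) S01).
  pose F := [set B | r < phi B].
  have rm : r <= inf01 (phi @` F).
    by apply: inf01_ge; [move=> _ [B /ltW ? <-]|apply: ltW].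
  apply: (le_trans rm); apply: (sup01_ge (ub:=1)).
    by move=> s /S01 /andP[].
  exists F; split => //.
  apply/seteqP; split => // x _.
  have h1 : 1 <= nbhd_sup T x setT.
    rewrite -{1}TX; apply: (sup01_ge (ub:=1)); last by exists setT.
    by move=> _ [B _ <-]; have /andP[] := fT B.
  have := lt_le_trans r1 (le_trans h1 (pb x setT)).
  move=> /(sup01_gt (r:=r) r0) [_ [B [Bx _] <-]] /(beta_gt r0) [C [BC rC]].
  by exists C => //; apply: BC.
- move=> H.
  have K : forall x r, 0 <= r -> r < 1 -> exists B, B x /\ r < phi B.
    move=> x r r0; rewrite -H => /(sup01_gt (r:=r) r0) [_ [F [EF ->]] rm].
    have : setT x by [].
    rewrite -EF => -[B FB Bx]; exists B; split => //.
    apply: lt_le_trans rm _; apply: (inf01_le (lb:=0)); last by exists B.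
    by move=> _ [C _ <-]; have /andP[] := phi01 C.
  exists (Top phi); split; last split; [split| |split].
  + by move=> A; apply: Top01.
  + apply/eqP; rewrite eq_le; have /andP[_ ->] /= := Top01 phi01 setT.
    apply: le_from_lt => r r1; case: (lerP 0 r) => r0; last first.
      by have /andP[h _] := Top01 phi01 setT; apply: ltW; apply: lt_le_trans h.
    apply: inf01_ge; last exact: ltW.
    move=> _ [x _ <-]; have [B [Bx rB]] := K x r r0 r1.
    apply: ltW; apply: (lt_le_trans rB); apply: le_trans (beta_ge phi01 B) _.
    exact: (N_ge phi01).
  + move=> A B; apply: inf01_ge; last first.
      by rewrite ge_min; have /andP[_ ->] := Top01 phi01 A.
    move=> _ [x [Ax Bx] <-]; apply: le_trans (N_min phi01 x A B).
    by rewrite le_min !ge_min !Top_le_N // orbT.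
  + move=> F; apply: inf01_ge; last first.
      by apply: inf01_le1 => _ [A _ <-]; apply: Top01.
    move=> _ [x [A FA Ax] <-].
    have h : inf01 (Top phi @` F) <= Top phi A.
      apply: (inf01_le (lb:=0)); last by exists A.
      by move=> _ [B _ <-]; have /andP[] := Top01 phi01 B.
    apply: (le_trans h).
    apply: le_trans (Top_le_N phi01 Ax) _; apply: (N_mono phi01) => y Ay.
    by exists A.
  + by move=> A; apply: beta01.
  + by move=> A; apply: Top_ge_beta.
  + move=> x A; apply: sup01_le; last by have /andP[] := N01 phi01 x A.
    move=> _ [B [Bx BA] <-]; apply: le_trans (Top_le_N phi01 Bx) _.
    exact: (N_mono phi01).
Qed.
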